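(* If $q$ is a well-formed PIFO tree, then $\mathsf{flush}(q)$ is an interleaving of the lists in $\mathsf{snap}(q)$.
   Context: Fix a set $\mathsf{Pkt}$ of packets and a totally ordered set $\mathsf{Rk}$ of ranks (smaller is more favorable). PIFOs: for a set $S$, a PIFO over $S$ is a finite sequence of pairs $(s,r)\in S\times\mathsf{Rk}$ in insertion order; $\mathsf{PIFO}(S)$ is the set of these. $\mathsf{pop}_{\mathsf{PIFO}}(p)$ is undefined if $p$ is empty; otherwise it removes the entry of minimal rank (earliest-inserted among ties) and returns $(s,p')$, its element and the rest. $|p|$ is the number of entries, $|p|_s$ the number with element $s$. Topologies: $\mathsf{Topo}$ is the smallest set with $*\in\mathsf{Topo}$ and $\mathsf{Node}(\vec t)\in\mathsf{Topo}$ for $n\in\mathbb{N}$, $\vec t\in\mathsf{Topo}^n$. PIFO trees: $\mathsf{Leaf}(p)\in\mathsf{PIFOTree}( * )$ for $p\in\mathsf{PIFO}(\mathsf{Pkt})$; $\mathsf{Internal}(\vec q,p)\in\mathsf{PIFOTree}(\mathsf{Node}(\vec t))$ whenever $\vec t\in\mathsf{Topo}^n$, $p\in\mathsf{PIFO}(\{1,\dots,n\})$, $\vec q[i]\in\mathsf{PIFOTree}(\vec t[i])$. $\vec q[q'/i]$ replaces the $i$-th entry by $q'$. pop (partial): $\mathsf{pop}(\mathsf{Leaf}(p))=(pkt,\mathsf{Leaf}(p'))$ if $\mathsf{pop}_{\mathsf{PIFO}}(p)=(pkt,p')$; $\mathsf{pop}(\mathsf{Internal}(\vec q,p))=(pkt,\mathsf{Internal}(\vec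 q[q'/i],p'))$ if $\mathsf{pop}_{\mathsf{PIFO}}(p)=(i,p')$ and $\mathsf{pop}(\vec q[i])=(pkt,q')$; undefined otherwise. Size: $|\mathsf{Leaf}(p)|=|p|$, $|\mathsf{Internal}(\vec q,p)|=\sum_i|\vec q[i]|$. Well-formedness: $\vdash\mathsf{Leaf}(p)$ always; $\vdash\mathsf{Internal}(\vec q,p)$ iff for all $i$, $\vdash\vec q[i]$ and $|p|_i=|\vec q[i]|$. Words: finite sequences are written by juxtaposition, $\epsilon$ is the empty word, $\cdot$ concatenation. For a PIFO $p$, $\textsc{flush}(p)$ is the word of elements obtained by repeatedly applying $\mathsf{pop}_{\mathsf{PIFO}}$ until $p$ is empty, with the last popped element leftmost. Snapshot (a list of words): $\mathsf{snap}(\mathsf{Leaf}(p)) = [\textsc{flush}(p)]$ and $\mathsf{snap}(\mathsf{Internal}(\vec q,p)) = \mathsf{snap}(\vec q[1]) +\!\!+ \cdots +\!\!+ \mathsf{snap}(\vec q[n])$, where $[x]$ is the one-element list and $+\!\!+$ list concatenation. For a well-formed $q$, $\mathsf{flush}(q)$ is defined by induction on $|q|$: $\mathsf{flush}(q)=\epsilon$ if $|q|=0$, and $\mathsf{flush}(q)=\mathsf{flush}(q')\cdot pkt$ if $|q|>0$ and $\mathsf{pop}(q)=(pkt,q')$. A word $w$ is an interleaving of words $w_1,\dots,w_k$ if the positions of $w$ can be partitioned into $k$ sets such that, for each $j$, the letters of $w$ at the $j$-th set, read in order, form $w_j$. *)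

(* Defs.v *)
From mathcomp Require Import all_boot all_order.
Set Implicit Arguments. Unset Strict Implicit. Unset Printing Implicit Defensive.
Import Order.TTheory.
Local Open Scope order_scope.

Inductive topo : Type := Star | Node of seq topo.

Section PIFOTrees.
Variables (Pkt : Type) (d : Order.disp_t) (Rk : orderType d).

(* A PIFO over S: entries (element, rank) in insertion order (head = earliest). *)
Definition pifo (S : Type) := seq (S * Rk).

Fixpoint pop_entry (S : Type) (p : pifo S) : option ((S * Rk) * pifo S) :=
  match p with
  | [::] => None
  | x :: p0 =>
      match pop_entry p0 with
      | None => Some (x, [::])
      | Some (y, p') => if x.2 <= y.2 then Some (x, p0) else Some (y, x :: p')
      end
  end.

Definition pop_pifo (S : Type) (p : pifo S) : option (S * pifo S) :=
  omap (fun ep => (ep.1.1, ep.2)) (pop_entry p).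

Definition pcount (S : eqType) (p : pifo S) (s : S) : nat :=
  count (fun e => e.1 == s) p.

(* PIFO trees (untyped); the topology is imposed by [has_topo].
   Children are indexed 0 .. n-1 (the paper uses 1 .. n). *)
Inductive ptree : Type :=
  | Leaf of pifo Pkt
  | Internal of seq ptree & pifo nat.

Fixpoint has_topo (t : topo) (q : ptree) : bool :=
  match t, q with
  | Star, Leaf _ => true
  | Node ts, Internal qs p =>
      (size qs == size ts) && all (fun e => e.1 < size qs) p &&
      (fix chk (ts : seq topo) (qs : seq ptree) : bool :=
         match ts, qs with
         | [::], [::] => true
         | t1 :: ts', q1 :: qs' => has_topo t1 q1 && chk ts' qs'
         | _, _ => false
         end) ts qs
  | _, _ => false
  end.

Definition is_pifotree (t : topo) (q : ptree) : Prop := has_topo t q.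

Fixpoint pop (q : ptree) : option (Pkt * ptree) :=
  match q with
  | Leaf p =>
      match pop_pifo p with
      | Some (pkt, p') => Some (pkt, Leaf p')
      | None => None
      end
  | Internal qs p =>
      match pop_pifo p with
      | Some (i, p') =>
          match (fix pop_at (qs : seq ptree) (i : nat) : option (Pkt * seq ptree) :=
                   match qs, i with
                   | [::], _ => None
                   | q1 :: qs', 0 =>
                       match pop q1 with
                       | Some (pkt, q1') => Some (pkt, q1' :: qs')
                       | None => None
                       end
                   | q1 :: qs', i'.+1 =>
                       match pop_at qs' i' with
                       | Some (pkt, qs'') => Some (pkt, q1 :: qs'')
                       | None => None
                       end
                   end) qs i with
          | Some (pkt, qs') => Some (pkt, Internal qs' p')
          | None => None
          end
      | None => None
      end
  end.

Fixpoint tsize (q : ptree) : nat :=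
  match q with
  | Leaf p => size p
  | Internal qs _ => sumn (map tsize qs)
  end.

Fixpoint wf (q : ptree) : bool :=
  match q with
  | Leaf _ => true
  | Internal qs p =>
      all wf qs &&
      all (fun i => pcount p i == tsize (nth (Leaf [::]) qs i)) (iota 0 (size qs))
  end.

(* flush of a PIFO: last popped element leftmost. Fuel = |p| suffices. *)
Fixpoint flushP_aux (S : Type) (n : nat) (p : pifo S) : seq S :=
  match n with
  | 0 => [::]
  | n'.+1 =>
      match pop_pifo p with
      | Some (s, p') => rcons (flushP_aux n' p') s
      | None => [::]
      end
  end.
Definition flushP (S : Type) (p : pifo S) : seq S := flushP_aux (size p) p.

Fixpoint snap (q : ptree) : seq (seq Pkt) :=
  match q with
  | Leaf p => [:: flushP p]
  | Internal qs _ => flatten (map snap qs)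
  end.

Fixpoint flush_aux (n : nat) (q : ptree) : seq Pkt :=
  match n with
  | 0 => [::]
  | n'.+1 =>
      if tsize q == 0 then [::] else
      match pop q with
      | Some (pkt, q') => rcons (flush_aux n' q') pkt
      | None => [::]
      end
  end.
Definition flush (q : ptree) : seq Pkt := flush_aux (tsize q) q.

End PIFOTrees.

(* w is an interleaving of ws = [w_1; ...; w_k]: positions of w are labelled
   by the part (0 .. k-1) they belong to, and reading each part in order
   gives the corresponding word. *)
Definition interleaving (A : Type) (w : seq A) (ws : seq (seq A)) : Prop :=
  exists lab : seq nat,
    [/\ size lab = size w,
        all (fun j => j < size ws) lab
      & forall j, j < size ws ->
          [seq x.1 | x <- zip w lab & x.2 == j] = nth [::] ws j].

(* Main.v *)
Require Import Defs.
From mathcomp Require Import all_boot all_order.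
From mathcomp Require Import zify.
Set Implicit Arguments. Unset Strict Implicit. Unset Printing Implicit Defensive.

Section S.
Variables (Pkt : Type) (d : Order.disp_t) (Rk : orderType d).
Notation tree := (ptree Pkt Rk).
Notation tsz := (@Defs.tsize Pkt d Rk).
Notation L0 := (@Leaf Pkt d Rk [::]).

Lemma pop_entry_none (S : Type) (p : pifo Rk S) : pop_entry p = None -> p = [::].
Proof.
case: p => //= x p. case: (pop_entry p) => [[y p0]|] //. by case: ifP.
Qed.

Lemma pop_entry_count (S : Type) (p : pifo Rk S) e p' :
  pop_entry p = Some (e, p') -> forall a, count a p = a e + count a p'.
Proof.
elim: p e p' => [|x p IH] e p' //=.
case E: (pop_entry p) => [[y p0]|].
- case: ifP => _ [<- <-] a //=.
  rewrite (IH _ _ E) /=; lia.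
- case=> <- <- a /=. by rewrite (pop_entry_none E).
Qed.

Lemma pop_entry_all (S : Type) (p : pifo Rk S) e p' :
  pop_entry p = Some (e, p') -> forall a, all a p = a e && all a p'.
Proof.
elim: p e p' => [|x p IH] e p' //=.
case E: (pop_entry p) => [[y p0]|].
- case: ifP => _ [<- <-] a //=.
  rewrite (IH _ _ E) /=. by case: (a x); case: (a y).
- case=> <- <- a /=. by rewrite (pop_entry_none E) /= ?andbT.
Qed.

Lemma pop_entry_some (S : Type) (p : pifo Rk S) :
  p <> [::] -> exists e p', pop_entry p = Some (e, p').
Proof.
case: p => // x p _ /=. case: (pop_entry p) => [[y p0]|]; last by eauto.
case: ifP; eauto.
Qed.

Lemma size_count (S : Type) (p : pifo Rk S) : size p = count predT p.
Proof. by rewrite count_predT. Qed.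


Definition pop_at (f : tree -> option (Pkt * tree)) :=
  fix pop_at (qs : seq tree) (i : nat) {struct qs}
  : option (Pkt * seq tree) :=
  match qs, i with
  | [::], _ => None
  | q1 :: qs', 0 =>
      match f q1 with
      | Some (pkt, q1') => Some (pkt, q1' :: qs')
      | None => None
      end
  | q1 :: qs', i'.+1 =>
      match pop_at qs' i' with
      | Some (pkt, qs'') => Some (pkt, q1 :: qs'')
      | None => None
      end
  end.

Lemma pop_Internal qs p : pop (Internal qs p) =
  match pop_pifo p with
  | Some (i, p') =>
     match pop_at (@pop Pkt d Rk) qs i with
     | Some (pkt, qs') => Some (pkt, Internal qs' p')
     | None => None
     end
  | None => None
  end.
Proof. reflexivity. Qed.

Lemma ptree_ind' (P : tree -> Prop) :
  (forall p, P (Leaf p)) ->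
  (forall qs p, (forall k, k < size qs -> P (nth L0 qs k)) -> P (Internal qs p)) ->
  forall q, P q.
Proof.
move=> HL HI. fix IH 1. case=> [p|qs p]; first exact: HL.
apply: HI. move: qs {p}. fix go 1. case=> [|q1 qs] k Hk.
  exfalso; clear -Hk; by rewrite ltn0 in Hk.
case: k Hk => [|k] Hk /=; first exact: IH.
exact: go.
Qed.

Lemma pop_at_dec qs i pkt qs' :
  pop_at (@pop Pkt d Rk) qs i = Some (pkt, qs') ->
  exists qs1 qi qs2 qi', [/\ qs = qs1 ++ qi :: qs2, qs' = qs1 ++ qi' :: qs2,
     size qs1 = i & pop qi = Some (pkt, qi')].
Proof.
elim: qs i qs' => [|q1 qs IH] [|i] qs' //=.
- case E: (pop q1) => [[pk q1']|] // [<- <-].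
  by exists [::], q1, qs, q1'.
- case E: (pop_at _ qs i) => [[pk qs'']|] // [Ep <-]; subst pk.
  have [qs1 [qi [qs2 [qi' [-> -> <- H]]]]] := IH _ _ E.
  by exists (q1 :: qs1), qi, qs2, qi'.
Qed.

Lemma pop_at_ex qs i pkt q' :
  i < size qs -> pop (nth L0 qs i) = Some (pkt, q') ->
  exists qs', pop_at (@pop Pkt d Rk) qs i = Some (pkt, qs').
Proof.
elim: qs i => [|q1 qs IH] [|i] //= Hi.
- move=> ->; eauto.
- move=> H; have [qs' ->] := IH _ Hi H; eauto.
Qed.


Fixpoint ok (q : tree) : bool :=
  match q with
  | Leaf _ => true
  | Internal qs p =>
      [&& all ok qs, all (fun e => e.1 < size qs) p &
        all (fun i => pcount p i == tsz (nth L0 qs i)) (iota 0 (size qs))]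
  end.

Lemma topo_ok t q : has_topo t q -> wf q -> ok q.
Proof.
elim/ptree_ind': q t => [p|qs p IH] [|ts] //=.
case/andP => /andP [/eqP Hsz Hall] Hchk /andP [Hwf Hcnt].
have Hk : forall k, k < size qs -> has_topo (nth Star ts k) (nth L0 qs k).
{ clear -Hchk. elim: ts qs Hchk => [|t1 ts IH] [|q1 qs] //=.
  case/andP => H1 H2 [|k] //= Hk. exact: IH. }
rewrite Hcnt andbT. apply/andP; split; last exact: Hall.
apply/(all_nthP L0) => k Hk'. apply: (IH k Hk' (nth Star ts k)); first exact: Hk.
exact: (all_nthP L0 Hwf).
Qed.

Lemma pop_pifo_entry (S : Type) (p : pifo Rk S) s p' :
  pop_pifo p = Some (s, p') -> exists r, pop_entry p = Some ((s, r), p').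
Proof.
rewrite /pop_pifo. case: (pop_entry p) => [[[s0 r] p0]|] //= [-> ->]. by exists r.
Qed.

Lemma pop_spec q pkt q' : pop q = Some (pkt, q') ->
  tsz q = (tsz q').+1 /\
  exists As Bs w, snap q = As ++ rcons w pkt :: Bs /\ snap q' = As ++ w :: Bs.
Proof.
elim/ptree_ind': q pkt q' => [p|qs p IH] pkt q'.
- rewrite /=. case E: (pop_pifo p) => [[s p']|] // [<- <-].
  have [r Ep] := pop_pifo_entry E.
  have Hs : size p = (size p').+1 by rewrite !size_count (pop_entry_count Ep).
  split; first by [].
  exists [::], [::], (flushP p'). split => //=.
  by rewrite /flushP Hs /= E.
- rewrite pop_Internal. case E: (pop_pifo p) => [[i p']|] //.
  case E2: (pop_at _ qs i) => [[pk qs']|] // [Ep <-]; subst pk.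
  have [qs1 [qi [qs2 [qi' [Eqs Eqs' Hi Hp]]]]] := pop_at_dec E2.
  have Hqi : nth L0 qs (size qs1) = qi by rewrite Eqs nth_cat ltnn subnn.
  have Hlt : size qs1 < size qs by rewrite Eqs size_cat /= addnS ltnS leq_addr.
  have := IH _ Hlt pkt qi'. rewrite Hqi => /(_ Hp) [Hs [As [Bs [w [Ha Hb]]]]].
  split.
  + rewrite /= Eqs Eqs' !map_cat !sumn_cat /= Hs. lia.
  + exists (flatten (map (@snap _ _ Rk) qs1) ++ As), (Bs ++ flatten (map (@snap _ _ Rk) qs2)), w.
    rewrite /= Eqs Eqs' !map_cat !flatten_cat /= Ha Hb -!catA. by split.
Qed.

Lemma ok_pop q pkt q' : ok q -> pop q = Some (pkt, q') -> ok q'.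
Proof.
elim/ptree_ind': q pkt q' => [p|qs p IH] pkt q'.
- rewrite /=. case E: (pop_pifo p) => [[s p']|] // _ [_ <-]. by [].
- rewrite pop_Internal. case E: (pop_pifo p) => [[i p']|] //.
  case E2: (pop_at _ qs i) => [[pk qs']|] // Hok [Ep <-]; subst pk.
  have [qs1 [qi [qs2 [qi' [Eqs Eqs' Hi Hp]]]]] := pop_at_dec E2.
  have Hqi : nth L0 qs (size qs1) = qi by rewrite Eqs nth_cat ltnn subnn.
  have Hlt : size qs1 < size qs by rewrite Eqs size_cat /= addnS ltnS leq_addr.
  have [r Epe] := pop_pifo_entry E.
  have [Hs _] := pop_spec Hp.
  have Hsz : size qs' = size qs by rewrite Eqs Eqs' !size_cat.
  move: Hok => /= /and3P [Hoks Hall Hcnt].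
  apply/and3P; split.
  + move: Hoks. rewrite Eqs Eqs' !all_cat /= => /and3P [H1 H2 H3].
    rewrite H1 H3 andbT /=. apply: (IH _ Hlt pkt); first by rewrite Hqi.
    by rewrite Hqi.
  + rewrite Hsz. move: Hall. by rewrite (pop_entry_all Epe) => /andP [].
  + apply/allP => k. rewrite Hsz mem_iota add0n => /andP [_ Hk].
    have := allP Hcnt k. rewrite mem_iota add0n Hk => /(_ isT) /eqP.
    rewrite /pcount (pop_entry_count Epe) /= -Hi => Hc.
    apply/eqP. move: Hc. rewrite Eqs Eqs' !nth_cat.
    case: ltnP => Hk1.
    * have -> : (size qs1 == k) = false by apply/eqP; lia.
      by [].
    * case Ek: (k - size qs1) => [|m] /=.
      - have -> : (size qs1 == k) = true by apply/eqP; lia.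
        rewrite Hs. lia.
      - have -> : (size qs1 == k) = false by apply/eqP; lia.
        by [].
Qed.

Lemma sumn_pos qs : 0 < sumn (map tsz qs) ->
  exists k, k < size qs /\ 0 < tsz (nth L0 qs k).
Proof.
elim: qs => [|q1 qs IH] //=.
case: (posnP (tsz q1)) => H1.
- rewrite H1 add0n => /IH [k [Hk Hk']]. by exists k.+1.
- move=> _. by exists 0.
Qed.

Lemma pop_ex q : ok q -> 0 < tsz q -> exists pkt q', pop q = Some (pkt, q').
Proof.
elim/ptree_ind': q => [p|qs p IH].
- move=> _ /= Hp.
  have [[s r] [p' E]] : exists e p', pop_entry p = Some (e, p').
    by apply: pop_entry_some; case: p Hp.
  by rewrite /= /pop_pifo E /=; eauto.
- move=> /and3P [Hoks Hall Hcnt] /sumn_pos [k [Hk Hk']].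
  have Hck : pcount p k = tsz (nth L0 qs k).
    apply/eqP. apply: (allP Hcnt). by rewrite mem_iota add0n Hk.
  have [[i r] [p' E]] : exists e p', pop_entry p = Some (e, p').
    apply: pop_entry_some => Hp0. move: Hck Hk'. rewrite Hp0 => <-. by [].
  have Hi : i < size qs.
    by move: Hall; rewrite (pop_entry_all E) => /andP [].
  have Hci : 0 < tsz (nth L0 qs i).
    have Hin : i \in iota 0 (size qs) by rewrite mem_iota add0n Hi.
    have /eqP <- := allP Hcnt i Hin.
    by rewrite /pcount (pop_entry_count E) /= eqxx.
  have Hok : ok (nth L0 qs i) by apply: (all_nthP L0 Hoks).
  have [pkt [q' Hq]] := IH _ Hi Hok Hci.
  have [qs' Ea] := pop_at_ex Hi Hq.
  rewrite pop_Internal /pop_pifo E /= Ea. eauto.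
Qed.

Lemma all_flat (A : Type) (a : pred A) (ss : seq (seq A)) :
  all (all a) ss -> all a (flatten ss).
Proof. elim: ss => //= s ss IH /andP [H1 H2]. by rewrite all_cat H1 IH. Qed.

Lemma sumn_ge qs k : k < size qs -> tsz (nth L0 qs k) <= sumn (map tsz qs).
Proof.
elim: qs k => [|q1 qs IH] [|k] //= Hk.
- exact: leq_addr.
- have := IH _ Hk. lia.
Qed.

Lemma tsz0 q : tsz q = 0 -> all (@nilp Pkt) (snap q).
Proof.
elim/ptree_ind': q => [p|qs p IH] /=.
- by case: p.
- move=> H. apply: all_flat. rewrite all_map. apply/(all_nthP L0) => k Hk.
  apply: IH => //. have := sumn_ge Hk. lia.
Qed.

End S.

Lemma inter_nil (A : Type) (ws : seq (seq A)) : all (@nilp A) ws -> interleaving [::] ws.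
Proof.
move=> H. exists [::]. split => // j Hj /=.
by have /nilP -> := all_nthP [::] H j Hj.
Qed.

Lemma inter_step (A : Type) (w : seq A) x As Bs w0 :
  interleaving w (As ++ w0 :: Bs) -> interleaving (rcons w x) (As ++ rcons w0 x :: Bs).
Proof.
case=> lab [Hs Hall Hj].
have Hsz : size (As ++ rcons w0 x :: Bs) = size (As ++ w0 :: Bs) by rewrite !size_cat.
exists (rcons lab (size As)). rewrite Hsz. split.
- by rewrite !size_rcons Hs.
- rewrite all_rcons Hall andbT size_cat /=. lia.
- move=> j Hj'. rewrite zip_rcons ?Hs // filter_rcons /=.
  have := Hj j Hj'. rewrite !nth_cat.
  case: (eqVneq (size As) j) => Hj2.
  + subst j. rewrite ltnn subnn /= => <-. by rewrite map_rcons.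
  + case: ltnP => H1 //.
    case E: (j - size As) => [|m] //=. lia.
Qed.

Lemma main_aux (Pkt : Type) (d : Order.disp_t) (Rk : orderType d) n :
  forall q : ptree Pkt Rk, ok q -> Defs.tsize q = n ->
  interleaving (flush_aux n q) (snap q).
Proof.
elim: n => [|n IH] q Hok Hsz.
- apply: inter_nil. exact: tsz0.
- have Hpos : 0 < Defs.tsize q by rewrite Hsz.
  have [pkt [q' Hp]] := pop_ex Hok Hpos.
  rewrite /= Hsz /= Hp.
  have [Hs [As [Bs [w [Ha Hb]]]]] := pop_spec Hp.
  rewrite Ha. apply: inter_step. rewrite -Hb. apply: IH.
  + exact: ok_pop Hok Hp.
  + by move: Hsz; rewrite Hs => -[].
Qed.

Theorem lemma4p5 (Pkt : Type) (d : Order.disp_t) (Rk : orderType d)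
  (t : topo) (q : ptree Pkt Rk) :
  is_pifotree t q -> wf q -> interleaving (flush q) (snap q).
Proof.
move=> Ht Hwf. rewrite /flush. apply: main_aux => //. exact: topo_ok Ht Hwf.
Qed.
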